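(* Consider the multidimensional robust Bayesian persuasion setting described in the context. For every $k$, every $n_1,\dots,n_k$, and every product prior $\mu=\mu_1\times\cdots\times\mu_k$ (with $\mu_j\in\Delta([n_j])$) of full support, $\mathrm{Reg}_{\mathrm{MON\text{-}MD}}\le 1-2^{-k}$.
   Context: Setting: the state space is $\Omega=\prod_{j=1}^k [n_j]$ with a publicly known prior $\mu\in\Delta(\Omega)$ assigning positive probability to every state. A signaling scheme is a stochastic map $\pi$ from $\Omega$ to a (finite or infinite) signal set $S$; Sender commits to $\pi$, the state $\omega\sim\mu$ is drawn, a signal $s\sim\pi(\omega)$ is sent, and Receiver forms the Bayesian posterior $p(s)\in\Delta(\Omega)$. Receiver has actions $\{0,1\}$ (reject/adopt) and utility $u_r:\Omega\times\{0,1\}\to\mathbb{R}$ with $u_r(\omega,0)=0$ for all $\omega$; Receiver adopts at posterior $p$ iff $\mathbb{E}_{\omega'\sim p}[u_r(\omega',1)]\ge 0$ (ties broken in favor of adoption). Sender's utility is $u(\pi,u_r)=\Pr_s[\text{Receiver adopts at }p(s)]$, and $u^*(u_r)=\sup_\pi u(\pi,u_r)$. $\mathrm{Reg}_{\mathrm{MON\text{-}MD}}=\inf_\pi\sup_{u_r\in\mathcal{U}}\{u^*(u_r)-u(\pi,u_r)\}$, where $\mathcal{U}$ is the class of Receiver utilities such that $u_r(\cdot,1)$ is non-decreasing in each coordinate: for every $j$, every $\omega'_j\le\omega''_j$ and every $\omega_{-j}$, $u_r((\omega'_j,\omega_{-j}),1)\le u_r((\omega''_j,\omega_{-j}),1)$.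 *)

(* Defs.v *)
From HB Require Import structures.
From mathcomp Require Import all_boot all_order all_algebra.
From mathcomp Require Import boolp classical_sets reals.
Unset Strict Implicit. Unset Printing Implicit Defensive.
Import Order.TTheory GRing.Theory Num.Theory.
Local Open Scope ring_scope.
Local Open Scope classical_set_scope.

Section Persuasion.
Variables (R : realType) (Omega : finType).

Record scheme := Scheme {
  signal : finType;
  sch : Omega -> signal -> R;
  pi_ge0 : forall w s, 0 <= sch w s;
  pi_sum1 : forall w, \sum_(s : signal) sch w s = 1 }.

Variable mu : Omega -> R.

Definition sig_prob (P : scheme) (s : signal P) : R :=
  \sum_(w : Omega) mu w * sch P w s.

(* Bayesian posterior p(s) (meaningful when sig_prob P s > 0). *)
Definition posterior (P : scheme) (s : signal P) (w : Omega) : R :=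
  mu w * sch P w s / sig_prob P s.

(* Receiver utility u_r(.,1) =: v (u_r(.,0) = 0); adoption iff the expected
   utility of adopting under the posterior is >= 0 (ties -> adopt). *)
Definition adopts (v : Omega -> R) (P : scheme) (s : signal P) : bool :=
  0 <= \sum_(w : Omega) posterior P s w * v w.

Definition sender_util (P : scheme) (v : Omega -> R) : R :=
  \sum_(s : signal P | 0 < sig_prob P s) sig_prob P s * (adopts v P s)%:R.

Definition opt_util (v : Omega -> R) : R :=
  sup [set x : R | exists P : scheme, x = sender_util P v].

Definition regret_of (U : set (Omega -> R)) (P : scheme) : R :=
  sup [set opt_util v - sender_util P v | v in U].

Definition Reg (U : set (Omega -> R)) : R :=
  inf [set x : R | exists P : scheme, x = regret_of U P].

End Persuasion.

Definition state (k : nat) (n : 'I_k -> nat) : finType :=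
  {dffun forall j : 'I_k, 'I_(n j)}.

Definition mon_md (R : realType) (k : nat) (n : 'I_k -> nat)
  : set (state k n -> R) :=
  [set v | forall (j : 'I_k) (w1 w2 : state k n),
      (forall i : 'I_k, i != j -> w1 i = w2 i) ->
      (nat_of_ord (w1 j) <= nat_of_ord (w2 j))%N -> v w1 <= v w2].

Definition prod_prior (R : realType) (k : nat) (n : 'I_k -> nat)
  (mus : forall j : 'I_k, 'I_(n j) -> R) : state k n -> R :=
  fun w => \prod_(j : 'I_k) mus j (w j).

(* Main.v *)
Require Import Defs.
From HB Require Import structures.
From mathcomp Require Import all_boot all_order all_algebra.
From mathcomp Require Import boolp classical_sets reals.
From mathcomp Require Import ring lra.
Import Order.TTheory GRing.Theory Num.Theory.
Local Open Scope ring_scope.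
Lemma sum_prod (R : realType) (k : nat) (n : 'I_k -> nat)
  (F : forall j : 'I_k, 'I_(n j) -> R) :
  \sum_(w : state k n) \prod_(j : 'I_k) F j (w j) = \prod_(j : 'I_k) \sum_(a : 'I_(n j)) F j a.
Proof.
rewrite (reindex (@dffun_of_fprod 'I_k (fun j => 'I_(n j)))); last first.
  by apply: onW_bij; exact: dffun_of_fprod_bij.
pose P_ := fun j => [ffun a : 'I_(n j) => F j a].
transitivity (\sum_(t : @fprod 'I_k (fun j => 'I_(n j))) \prod_(j in 'I_k) P_ j (t j)).
  apply: eq_bigr => t _; apply: eq_bigr => j _.
  by rewrite /P_ ffunE /dffun_of_fprod ffunE.
rewrite big_fprod. 
rewrite -(bigA_distr_big_dep (tagged_with (fun x => 'I_(n x))) (fun i j => untag 0 (P_ i) j)); apply: eq_bigr => j _.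
transitivity (\sum_(a : 'I_(n j)) P_ j a); last by apply: eq_bigr => a _; rewrite /P_ ffunE.
by rewrite (big_tag (fun j a => P_ j a) j).
Qed.
Section OneDim.
Variables (R : realType) (N : nat) (mu : 'I_N -> R).
Hypothesis mu_pos : forall a, 0 < mu a.
Hypothesis mu_sum : \sum_a mu a = 1.

Definition Sx (i : nat) : R := \sum_(b : 'I_N | (i <= b)%N) mu b.
Definition Fx (i : nat) : R := if Sx i <= 2^-1 then 2^-1 - Sx i else 0.
Definition gx (a : 'I_N) : R := Fx a.+1 - Fx a.

Lemma Sx_split (a : 'I_N) : Sx a = mu a + Sx a.+1.
Proof.
rewrite /Sx (bigD1 a) //=; congr (_ + _).
apply: eq_bigl => b; rewrite ltn_neqAle eq_sym -val_eqE /=.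
by case: (a <= b)%N; rewrite ?andbT ?andbF.
Qed.

Lemma Sx_anti (i i' : nat) : (i <= i')%N -> Sx i' <= Sx i.
Proof.
move=> hii; rewrite /Sx [X in _ <= X]big_mkcond [X in X <= _]big_mkcond /=.
apply: ler_sum => b _; case: ifP => h1; first by rewrite (leq_trans hii h1).
by case: ifP => _ //; exact: ltW.
Qed.

Lemma Sx0 : Sx 0 = 1.
Proof. by rewrite /Sx -mu_sum; apply: eq_bigl. Qed.

Lemma SxN : Sx N = 0.
Proof. rewrite /Sx big_pred0 // => b; by rewrite leqNgt ltn_ord. Qed.

Lemma Sx_ge0 i : 0 <= Sx i.
Proof. by apply: sumr_ge0 => b _; exact: ltW. Qed.

Lemma gx_ge0 a : 0 <= gx a.
Proof.
rewrite /gx /Fx; have := Sx_split a; have := mu_pos a.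
by case: ifP => h1; case: ifP => h2; lra.
Qed.

Lemma gx_le a : gx a <= mu a.
Proof.
rewrite /gx /Fx; have := Sx_split a; have := mu_pos a; have := Sx_ge0 a.+1.
by case: ifP => h1; case: ifP => h2; lra.
Qed.

Lemma sum_gx : \sum_a gx a = 2^-1.
Proof.
rewrite /gx -(big_mkord xpredT (fun i => Fx i.+1 - Fx i)) telescope_sumr //.
rewrite /Fx SxN Sx0; case: ifP => h1; last by lra.
case: ifP => h2; lra.
Qed.

Lemma gx_sep a b : 0 < gx a -> gx b < mu b -> (b <= a)%N.
Proof.
move=> ha hb; rewrite leqNgt; apply/negP => hab.
have := Sx_anti _ _ hab; have := Sx_split b; move: ha hb; rewrite /gx /Fx.
have := mu_pos b.
by case: ifP => h1; case: ifP => h2; case: ifP => h3; case: ifP => h4; lra.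
Qed.
End OneDim.
Arguments gx {R N} mu a.
Arguments gx_ge0 {R N mu}. Arguments gx_le {R N mu}. Arguments sum_gx {R N mu}.
Arguments gx_sep {R N mu}.
Lemma mono_multi (R : realType) (k : nat) (n : 'I_k -> nat) (v : state k n -> R) :
  mon_md R k n v -> forall w1 w2 : state k n,
  (forall j, (nat_of_ord (w1 j) <= nat_of_ord (w2 j))%N) -> v w1 <= v w2.
Proof.
move=> hv.
suff H : forall N (w1 w2 : state k n), (#|[set j | w1 j != w2 j]| <= N)%N ->
  (forall j, (nat_of_ord (w1 j) <= nat_of_ord (w2 j))%N) -> v w1 <= v w2.
  by move=> w1 w2; apply: (H _ w1 w2 (leqnn _)).
elim=> [|N IH] w1 w2 hc hle.
  have -> : w1 = w2; last by [].
  apply/ffunP => j; apply/eqP; apply: contraT => hj.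
  by move: hc; rewrite leqn0 cards_eq0 => /eqP/setP/(_ j); rewrite inE hj inE.
have [j0|] := pickP (fun j => w1 j != w2 j); last first.
  move=> h; have -> : w1 = w2; last by [].
  by apply/ffunP => j; move: (h j) => /negbFE/eqP.
move=> hj0.
pose w' : state k n := [ffun j => if j == j0 then w2 j else w1 j].
apply: (@le_trans _ _ (v w')).
  apply: (hv j0) => [i hi|]; first by rewrite ffunE (negbTE hi).
  by rewrite ffunE eqxx.
apply: IH => [|j]; last first.
  by rewrite ffunE; case: ifP => // _; exact: hle.
have sub : [set j | w' j != w2 j] \subset [set j | w1 j != w2 j] :\ j0.
  apply/fintype.subsetP => j; rewrite !inE ffunE.
  by have [->|hne] := eqVneq j j0; rewrite ?eqxx // (negbTE hne).
rewrite -ltnS; apply: (leq_ltn_trans (subset_leq_card sub)).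
by rewrite (cardsD1 j0) inE hj0 /= add1n ltnS in hc.
Qed.
Definition ind {R : realType} (b : bool) : R := b%:R.
Section Layer.
Variable R : realType.
Lemma exists_min (T : finType) (P : pred T) (F : T -> R) i0 : P i0 ->
  exists2 i, P i & forall j, P j -> F i <= F j.
Proof.
move=> Pi0.
case: (@extremumP R T (<=%R) i0 P F (@lexx _ _) (@le_trans _ _) (@le_total _ _) Pi0) => i Pi h.
by exists i.
Qed.

Lemma layer (T : finType) (a b v : T -> R) :
  \sum_w a w = \sum_w b w ->
  (forall l, \sum_w a w * ind (l <= v w) <= \sum_w b w * ind (l <= v w)) ->
  \sum_w a w * v w <= \sum_w b w * v w.
Proof.
move=> hab.
suff H : forall (N : nat) (v : T -> R) (m : R),
  (forall l, \sum_w a w * ind (l <= v w) <= \sum_w b w * ind (l <= v w)) ->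
  (forall w : T, m <= v w) -> (#|[set w | (m < v w)%R]| <= N)%N ->
  \sum_w a w * v w <= \sum_w b w * v w.
  move=> hl; apply: (H #|T| v (- \sum_w `|v w|)) => // [w|]; last exact: max_card.
  rewrite lerNl; apply: (le_trans (ler_norm _)); rewrite normrN.
  rewrite (bigD1 w) //= lerDl; apply: sumr_ge0 => i _; exact: normr_ge0.
have const : forall (v : T -> R) m, (forall w, v w = m) ->
    \sum_w a w * v w <= \sum_w b w * v w.
  move=> v0 m hv; rewrite (eq_bigr (fun w => a w * m)) => [|w _]; last by rewrite hv.
  rewrite [X in _ <= X](eq_bigr (fun w => b w * m)) => [|w _]; last by rewrite hv.
  by rewrite -!big_distrl /= hab.
elim=> [|N IH] v0 m hl hm hc.
  apply: (const v0 m) => w; apply/eqP; rewrite eq_le hm andbT leNgt; apply/negP => hw.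
  by move: hc; rewrite leqn0 cards_eq0 => /eqP/setP/(_ w); rewrite !inE hw.
have [w0 hw0|hno] := pickP (fun w => m < v0 w); last first.
  apply: (const v0 m) => w; apply/eqP; rewrite eq_le hm andbT leNgt; exact/negbT/hno.
have [w1 hw1 hmin] := @exists_min T (fun w => m < v0 w) v0 w0 hw0.
set m1 := v0 w1.
pose v' := fun w => Num.max (v0 w) m1.
have hid : forall w, v0 w = v' w - (m1 - m) * (1 - ind (m1 <= v0 w)).
  move=> w; rewrite /v'; case: (leP m1 (v0 w)) => h.
    by rewrite /ind /= subrr mulr0 subr0.
  rewrite /ind /= subr0 mulr1.
  have : ~~ (m < v0 w) by apply/negP => /hmin; rewrite leNgt h.
  rewrite -leNgt => h2; have -> : v0 w = m by apply/eqP; rewrite eq_le h2 hm.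
  by rewrite opprB addrC subrK.
have E : forall c : T -> R, \sum_w c w * v0 w =
    \sum_w c w * v' w - (m1 - m) * (\sum_w c w - \sum_w c w * ind (m1 <= v0 w)).
  move=> c; rewrite (eq_bigr (fun w => c w * v' w - (m1 - m) * (c w - c w * ind (m1 <= v0 w)))) => [|w _]; last first.
    by rewrite {1}hid; ring.
  by rewrite sumrB -mulr_sumr sumrB.
have IH' : \sum_w a w * v' w <= \sum_w b w * v' w.
  apply: (IH v' m1) => [l|w|].
  - rewrite /v'; case: (leP l m1) => hl1.
      rewrite (eq_bigr (fun w => a w)) => [|w _]; last by rewrite le_max hl1 orbT mulr1.
      by rewrite [X in _ <= X](eq_bigr (fun w => b w)) => [|w _]; rewrite ?hab // le_max hl1 orbT mulr1.
    rewrite (eq_bigr (fun w => a w * ind (l <= v0 w))) => [|w _]; last first.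
      by rewrite le_max (leNgt l m1) hl1 orbF.
    rewrite [X in _ <= X](eq_bigr (fun w => b w * ind (l <= v0 w))) => [|w _]; last first.
      by rewrite le_max (leNgt l m1) hl1 orbF.
    exact: hl.
  - by rewrite /v' le_max lexx orbT.
  - have sub : [set w | m1 < v' w] \subset [set w | m < v0 w] :\ w1.
      apply/fintype.subsetP => w; rewrite !inE /v' lt_max ltxx orbF => h.
      rewrite (lt_trans hw1 h) andbT; apply/eqP => ew; move: h; rewrite ew ltxx //.
    rewrite -ltnS; apply: (leq_ltn_trans (subset_leq_card sub)).
    by rewrite (cardsD1 w1) inE hw1 /= add1n ltnS in hc.
rewrite (E a) (E b).
have hd : 0 < m1 - m by rewrite subr_gt0.
have := ler_wpM2l (ltW hd) (hl m1).
move: IH'; rewrite hab; lra.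
Qed.
End Layer.
Section Multi.
Variables (R : realType) (k : nat) (n : 'I_k -> nat).
Variable (mus : forall j : 'I_k, 'I_(n j) -> R).
Hypothesis mus_pos : forall (j : 'I_k) (a : 'I_(n j)), 0 < mus j a.
Hypothesis mus_sum1 : forall j : 'I_k, \sum_(a : 'I_(n j)) mus j a = 1.

Local Notation Om := (state k n).
Definition gg j a := gx (mus j) a.
Definition cc j a := mus j a - gg j a.
Definition muw (w : Om) : R := \prod_j mus j (w j).
Definition Bw (w : Om) : R := \prod_j gg j (w j).
Definition Gw (w : Om) : R := \prod_j cc j (w j).
Definition ss : R := (2^-1) ^+ k.

Lemma gg_ge0 j a : 0 <= gg j a. Proof. exact: (gx_ge0 (mus_pos j)). Qed.
Lemma cc_ge0 j a : 0 <= cc j a.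
Proof. by rewrite /cc subr_ge0; apply: (gx_le (mus_pos j)). Qed.
Lemma sum_gg j : \sum_a gg j a = 2^-1.
Proof. exact: (sum_gx (mus_sum1 j)). Qed.
Lemma sum_cc j : \sum_a cc j a = 2^-1.
Proof. by rewrite /cc sumrB mus_sum1 sum_gg; lra. Qed.

Lemma sum_muw : \sum_w muw w = 1.
Proof. by rewrite /muw sum_prod; apply: big1 => j _; exact: mus_sum1. Qed.
Lemma sum_Bw : \sum_w Bw w = ss.
Proof. by rewrite /Bw sum_prod /ss -[X in _ ^+ X]card_ord -prodr_const; apply: eq_bigr => j _; exact: sum_gg. Qed.
Lemma sum_Gw : \sum_w Gw w = ss.
Proof. by rewrite /Gw sum_prod /ss -[X in _ ^+ X]card_ord -prodr_const; apply: eq_bigr => j _; exact: sum_cc. Qed.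
Lemma Bw_ge0 w : 0 <= Bw w.
Proof. by apply: prodr_ge0 => j _; exact: gg_ge0. Qed.
Lemma Gw_ge0 w : 0 <= Gw w.
Proof. by apply: prodr_ge0 => j _; exact: cc_ge0. Qed.
Lemma muw_ge0 w : 0 <= muw w.
Proof. by apply: prodr_ge0 => j _; exact: ltW. Qed.
Lemma ss_gt0 : 0 < ss.
Proof. by rewrite /ss exprn_gt0 // invr_gt0. Qed.

Definition mix (S : {ffun 'I_k -> bool}) (x y : Om) : Om :=
  [ffun j => if S j then y j else x j].

Definition rho (S : {ffun 'I_k -> bool}) (z : Om) : R :=
  \prod_j (if S j then gg j (z j) else cc j (z j)).

Lemma muw_expand z : muw z = \sum_(S : {ffun 'I_k -> bool}) rho S z.
Proof.
rewrite /muw /rho.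
transitivity (\prod_j \sum_(b : bool) (if b then gg j (z j) else cc j (z j))).
  by apply: eq_bigr => j _; rewrite big_bool /= /cc; ring.
by rewrite bigA_distr_bigA.
Qed.

Lemma coupling S (f : Om -> R) :
  \sum_x \sum_y Gw x * Bw y * f (mix S x y) = ss * \sum_z rho S z * f z.
Proof.
pose psi (p : Om * Om) := (mix S p.1 p.2, mix S p.2 p.1).
have psiK : involutive psi.
  move=> [x y]; rewrite /psi /=; congr pair; apply/ffunP => j; rewrite !ffunE;
  by case: (S j).
rewrite pair_bigA /= (reindex_inj (inv_inj psiK)) /=.
rewrite -(pair_bigA _ (fun z w => Gw (mix S z w) * Bw (mix S w z) * f (mix S (mix S z w) (mix S w z)))) /=.
rewrite big_distrr /=; apply: eq_bigr => z _.
have -> : \sum_w Gw (mix S z w) * Bw (mix S w z) * f (mix S (mix S z w) (mix S w z))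
   = \sum_w rho S z * rho (finfun (fun j => ~~ S j)) w * f z.
  apply: eq_bigr => w _.
  have -> : mix S (mix S z w) (mix S w z) = z.
    by apply/ffunP => j; rewrite !ffunE; case: (S j).
  congr (_ * _); rewrite /Gw /Bw /rho -!big_split /=; apply: eq_bigr => j _.
  by rewrite /mix !ffunE; case: (S j) => //=; rewrite mulrC.
rewrite (eq_bigr (fun w => rho S z * f z * rho (finfun (fun j => ~~ S j)) w)); last first.
  by move=> w _; rewrite mulrAC.
rewrite -big_distrr /= mulrC; congr (_ * _).
rewrite /rho (@sum_prod R k n (fun j a => if [ffun j => ~~ S j] j then gg j a else cc j a)) /ss -[X in _ ^+ X]card_ord -prodr_const; apply: eq_bigr => j _.
rewrite ffunE; case: (S j) => /=; [exact: sum_cc | exact: sum_gg].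
Qed.

Lemma prod_pos_each (F : forall j : 'I_k, R) :
  (forall j, 0 <= F j) -> 0 < \prod_j F j -> forall j, 0 < F j.
Proof.
move=> h0 hp j; rewrite lt0r h0 andbT.
by have /prodf_neq0/(_ j isT) : \prod_j F j != 0 by rewrite gt_eqF.
Qed.

Lemma gg_sep j a b : 0 < gg j a -> 0 < cc j b -> (nat_of_ord b <= nat_of_ord a)%N.
Proof.
move=> ha hb; apply: (gx_sep (mus_pos j)) => //.
by move: hb; rewrite /cc subr_gt0.
Qed.

Lemma lemE (u : Om -> R) (w0 : Om) : mon_md R k n u -> (forall w, 0 <= u w) ->
  u w0 = 0 -> 0 < Bw w0 ->
  \sum_w muw w * u w <= (2%:R ^+ k - 1) * \sum_w Bw w * u w.
Proof.
move=> hu u0 uw0 hB0.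
have hg0 := prod_pos_each (fun j => gg j (w0 j)) (fun j => gg_ge0 j (w0 j)) hB0.
have step1 : \sum_w muw w * u w =
    ss^-1 * \sum_x \sum_y \sum_S Gw x * Bw y * u (mix S x y).
  have ex : \sum_x \sum_y \sum_S Gw x * Bw y * u (mix S x y) =
      \sum_S \sum_x \sum_y Gw x * Bw y * u (mix S x y).
    transitivity (\sum_x \sum_S \sum_y Gw x * Bw y * u (mix S x y)).
      by apply: eq_bigr => x _; exact: exchange_big.
    exact: exchange_big.
  rewrite ex (eq_bigr (fun S => ss * \sum_z rho S z * u z)); last first.
    by move=> S _; rewrite coupling.
  rewrite -big_distrr /= mulrA mulVf ?mul1r; last exact: lt0r_neq0 ss_gt0.
  rewrite exchange_big /=; apply: eq_bigr => w _.
  by rewrite muw_expand big_distrl.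
rewrite step1.
have step2 : forall x y, \sum_S Gw x * Bw y * u (mix S x y) <=
    Gw x * Bw y * ((2%:R ^+ k - 1) * u y).
  move=> x y.
  have [hz|hnz] := eqVneq (Gw x * Bw y) 0.
    by rewrite hz mul0r big1 // => S _; rewrite mul0r.
  have hpos : 0 < Gw x * Bw y by rewrite lt0r hnz mulr_ge0 // ?Gw_ge0 ?Bw_ge0.
  have hGx : 0 < Gw x.
    by rewrite lt0r Gw_ge0 andbT; apply: contra hnz => /eqP ->; rewrite mul0r.
  have hBy : 0 < Bw y.
    by rewrite lt0r Bw_ge0 andbT; apply: contra hnz => /eqP ->; rewrite mulr0.
  have hc := prod_pos_each (fun j => cc j (x j)) (fun j => cc_ge0 j (x j)) hGx.
  have hgy := prod_pos_each (fun j => gg j (y j)) (fun j => gg_ge0 j (y j)) hBy.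
  rewrite -big_distrr /=; rewrite ler_pM2l //.
  rewrite (bigD1 [ffun => false]) //=.
  have -> : u (mix [ffun => false] x y) = 0.
    apply/eqP; rewrite eq_le u0 andbT -uw0; apply: mono_multi => // j.
    by rewrite /mix !ffunE; apply: gg_sep.
  rewrite add0r.
  apply: (@le_trans _ _ (\sum_(S | S != [ffun => false]) u y)).
    apply: ler_sum => S _; apply: mono_multi => // j.
    rewrite /mix ffunE; case: (S j) => //; exact: gg_sep.
  have := sumr_const [pred S : {ffun 'I_k -> bool} | S != [ffun => false]] (u y).
  rewrite /= => ->.
  rewrite cardC1 card_ffun card_bool card_ord.
  by rewrite -[u y *+ _]mulr_natr mulrC -subn1 natrB ?expn_gt0 // natrX.
have ssi : 0 <= ss^-1 by rewrite invr_ge0 ltW // ss_gt0.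
have hs : \sum_x \sum_y \sum_S Gw x * Bw y * u (mix S x y) <=
    \sum_x \sum_y Gw x * Bw y * ((2%:R ^+ k - 1) * u y).
  by apply: ler_sum => x _; apply: ler_sum => y _; exact: step2.
apply: (le_trans (ler_wpM2l ssi hs)).
have e : \sum_x \sum_y Gw x * Bw y * ((2%:R ^+ k - 1) * u y) =
    ss * ((2%:R ^+ k - 1) * \sum_w Bw w * u w).
  rewrite -sum_Gw big_distrl /=; apply: eq_bigr => x _.
  rewrite !mulr_sumr; apply: eq_bigr => y _; ring.
by rewrite e mulrA mulVf ?mul1r //; exact: lt0r_neq0 ss_gt0.
Qed.

Lemma ss_le1 : ss <= 1.
Proof. by rewrite /ss exprn_ile1 // ?invr_ge0 // invf_le1 // ler1n. Qed.

Lemma ss2k : ss * 2%:R ^+ k = 1.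
Proof. by rewrite /ss -exprMn mulVf ?expr1n // pnatr_eq0. Qed.

Lemma ind_mon (v : Om -> R) l : mon_md R k n v -> mon_md R k n (fun w => ind (l <= v w)).
Proof.
move=> hv j w1 w2 h1 h2; rewrite /ind.
case: (boolP (l <= v w1)) => h; last by case: (l <= v w2).
by rewrite (le_trans h (hv j w1 w2 h1 h2)).
Qed.

Lemma ind_ge0 (b : bool) : 0 <= ind b :> R.
Proof. by rewrite /ind; case: b. Qed.
Lemma ind_le1 (b : bool) : ind b <= 1 :> R.
Proof. by rewrite /ind; case: b. Qed.

Lemma lemD (q v : Om -> R) l : mon_md R k n v ->
  (forall w, 0 <= q w <= 1) -> 1 - ss < \sum_w muw w * q w ->
  \sum_w ss * (muw w * q w) * ind (l <= v w) <=
  \sum_w (\sum_w muw w * q w) * Bw w * ind (l <= v w).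
Proof.
move=> hv hq hp; set p := \sum_w muw w * q w.
have hX : 0 <= \sum_w Bw w * ind (l <= v w).
  by apply: sumr_ge0 => w _; rewrite mulr_ge0 ?Bw_ge0 ?ind_ge0.
have hLHS : \sum_w ss * (muw w * q w) * ind (l <= v w) <=
    ss * \sum_w muw w * ind (l <= v w).
  rewrite mulr_sumr; apply: ler_sum => w _; rewrite -mulrA ler_wpM2l ?(ltW ss_gt0) //.
  apply: ler_wpM2r; first exact: ind_ge0.
  rewrite -[X in _ <= X]mulr1; apply: ler_wpM2l; first exact: muw_ge0.
  by case/andP: (hq w).
have hLHS2 : \sum_w ss * (muw w * q w) * ind (l <= v w) <= ss * p.
  rewrite /p mulr_sumr; apply: ler_sum => w _; rewrite -mulrA ler_wpM2l ?(ltW ss_gt0) //.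
  rewrite -[X in _ <= X]mulr1; apply: ler_wpM2l; last exact: ind_le1.
  by rewrite mulr_ge0 ?muw_ge0 //; case/andP: (hq w).
have eR : \sum_w p * Bw w * ind (l <= v w) = p * \sum_w Bw w * ind (l <= v w).
  by rewrite mulr_sumr; apply: eq_bigr => w _; rewrite mulrA.
rewrite eR.
have [w0 /andP [hB0 hl0]|hno] := pickP (fun w => (0 < Bw w) && ~~ (l <= v w)).
  have hE := @lemE (fun w => ind (l <= v w)) w0 (ind_mon v l hv) (fun w => ind_ge0 _).
  have hu0 : ind (l <= v w0) = 0 :> R by rewrite /ind (negbTE hl0).
  have h1 := ler_wpM2l (ltW ss_gt0) (hE hu0 hB0).
  have e1 : ss * ((2%:R ^+ k - 1) * \sum_w Bw w * ind (l <= v w)) =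
      (1 - ss) * \sum_w Bw w * ind (l <= v w).
    by rewrite mulrA mulrBr ss2k mulr1.
  have h2 := ler_wpM2r hX (ltW hp); rewrite -/p in h2.
  move: h1; rewrite e1 => h1.
  lra.
have eB : \sum_w Bw w * ind (l <= v w) = ss.
  rewrite -sum_Bw; apply: eq_bigr => w _.
  have := hno w; rewrite /=.
  have [->|hB] := eqVneq (Bw w) 0; first by rewrite mul0r.
  have hBp : 0 < Bw w by rewrite lt0r hB Bw_ge0.
  by rewrite hBp /= => /negbFE ->; rewrite /ind mulr1.
by rewrite eB mulrC.
Qed.

Lemma lemB (q v : Om -> R) : mon_md R k n v ->
  (forall w, 0 <= q w <= 1) -> 0 <= \sum_w muw w * q w * v w ->
  \sum_w Bw w * v w < 0 -> \sum_w muw w * q w <= 1 - ss.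
Proof.
move=> hv hq h0 hneg; rewrite leNgt; apply/negP => hp.
set p := \sum_w muw w * q w in hp.
have := @layer R Om (fun w => ss * (muw w * q w)) (fun w => p * Bw w) v.
rewrite -!mulr_sumr sum_Bw mulrC => /(_ erefl).
move=> /(_ (fun l => @lemD q v l hv hq hp)).
rewrite (eq_bigr (fun w => ss * (muw w * q w * v w))) => [|w _]; last by rewrite !mulrA.
rewrite [X in _ <= X](eq_bigr (fun w => p * (Bw w * v w))) => [|w _]; last by rewrite !mulrA.
rewrite -!mulr_sumr.
have hpp : 0 < p by have := ss_le1; lra.
have := ss_gt0.
move: h0 hneg hpp; nra.
Qed.

Definition hw (w : Om) : R := \prod_j (gg j (w j) / mus j (w j)).

Lemma hw_ge0 w : 0 <= hw w.
Proof.
apply: prodr_ge0 => j _; apply: divr_ge0; [exact: gg_ge0 | exact: ltW].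
Qed.
Lemma hw_le1 w : hw w <= 1.
Proof.
apply: prodr_ile1 => j _; apply/andP; split.
  apply: divr_ge0; [exact: gg_ge0 | exact: ltW].
by rewrite ler_pdivrMr // mul1r; apply: (gx_le (mus_pos j)).
Qed.
Lemma muw_hw w : muw w * hw w = Bw w.
Proof.
rewrite /muw /hw /Bw -big_split /=; apply: eq_bigr => j _.
by rewrite mulrC divfK // gt_eqF.
Qed.

Lemma schP_ge0 w (b : bool) : 0 <= (if b then hw w else 1 - hw w).
Proof. by case: b; rewrite ?subr_ge0 ?hw_ge0 ?hw_le1. Qed.
Lemma schP_sum w : \sum_(b : bool) (if b then hw w else 1 - hw w) = 1.
Proof. by rewrite big_bool /= addrC subrK. Qed.

Definition schP := Scheme R Om bool (fun w b => if b then hw w else 1 - hw w)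
  schP_ge0 schP_sum.

Local Notation mu := (prod_prior R k n mus).

Lemma sp_ge0 (Q : scheme R Om) s : 0 <= sig_prob R Om mu Q s.
Proof. by apply: sumr_ge0 => w _; rewrite mulr_ge0 ?muw_ge0 ?pi_ge0. Qed.

Definition qQ (Q : scheme R Om) (v : Om -> R) (w : Om) : R :=
  \sum_(s | (0 < sig_prob R Om mu Q s) && adopts R Om mu v Q s) sch R Om Q w s.

Lemma util_alt Q v : sender_util R Om mu Q v = \sum_w muw w * qQ Q v w.
Proof.
rewrite /sender_util.
transitivity (\sum_(s | (0 < sig_prob R Om mu Q s) && adopts R Om mu v Q s) sig_prob R Om mu Q s).
  rewrite big_mkcondr /=; apply: eq_bigr => s _.
  by case: (adopts _ _ _ _ _ _); rewrite ?mulr1 ?mulr0.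
rewrite /sig_prob exchange_big /=; apply: eq_bigr => w _.
by rewrite /qQ mulr_sumr.
Qed.

Lemma qQ_bounds Q v w : 0 <= qQ Q v w <= 1.
Proof.
apply/andP; split; first by apply: sumr_ge0 => s _; exact: pi_ge0.
rewrite -(@pi_sum1 R Om Q w) /qQ big_mkcond /=; apply: ler_sum => s _.
by case: ifP => _; rewrite ?pi_ge0.
Qed.

Lemma qQ_v_ge0 Q v : 0 <= \sum_w muw w * qQ Q v w * v w.
Proof.
rewrite (eq_bigr (fun w => \sum_(s | (0 < sig_prob R Om mu Q s) && adopts R Om mu v Q s)
     muw w * sch R Om Q w s * v w)); last first.
  by move=> w _; rewrite /qQ mulr_sumr mulr_suml.
rewrite exchange_big /=; apply: sumr_ge0 => s /andP [hs had].
move: had; rewrite /adopts /posterior => had.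
have -> : \sum_w muw w * sch R Om Q w s * v w =
    sig_prob R Om mu Q s * \sum_w mu w * sch R Om Q w s / sig_prob R Om mu Q s * v w.
  rewrite mulr_sumr; apply: eq_bigr => w _.
  by rewrite mulrA [sig_prob _ _ _ _ _ * _]mulrC divfK ?gt_eqF.
by rewrite mulr_ge0 // ltW.
Qed.

Lemma util_le1 Q v : sender_util R Om mu Q v <= 1.
Proof.
rewrite util_alt -sum_muw; apply: ler_sum => w _.
rewrite -[X in _ <= X]mulr1; apply: ler_wpM2l; first exact: muw_ge0.
by case/andP: (qQ_bounds Q v w).
Qed.

Lemma util_ge0 Q v : 0 <= sender_util R Om mu Q v.
Proof.
rewrite util_alt; apply: sumr_ge0 => w _; rewrite mulr_ge0 ?muw_ge0 //.
by case/andP: (qQ_bounds Q v w).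
Qed.

Lemma util_neg Q v : mon_md R k n v -> \sum_w Bw w * v w < 0 ->
  sender_util R Om mu Q v <= 1 - ss.
Proof.
move=> hv hneg; rewrite util_alt; apply: (lemB (qQ Q v) v hv (qQ_bounds Q v)) => //.
exact: qQ_v_ge0.
Qed.

Lemma spP_true : sig_prob R Om mu schP true = ss.
Proof.
rewrite /sig_prob /= -sum_Bw; apply: eq_bigr => w _; exact: muw_hw.
Qed.

Lemma utilP_pos v : 0 <= \sum_w Bw w * v w -> ss <= sender_util R Om mu schP v.
Proof.
move=> hv.
have had : adopts R Om mu v schP true.
  rewrite /adopts /posterior spP_true.
  rewrite (eq_bigr (fun w => ss^-1 * (Bw w * v w))); last first.
    move=> w _; have e : mu w * hw w = Bw w by exact: muw_hw.
    by rewrite /schP /= e; ring.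
  by rewrite -mulr_sumr mulr_ge0 // invr_ge0 ltW // ss_gt0.
rewrite /sender_util big_mkcond big_bool /= spP_true ss_gt0 had mulr1.
rewrite lerDl; case: ifP => _ //; rewrite mulr_ge0 ?sp_ge0 //.
Qed.

Lemma opt_bound v : mon_md R k n v ->
  opt_util R Om mu v <= 1 - ss + sender_util R Om mu schP v.
Proof.
move=> hv; apply: ge_sup; first by exists (sender_util R Om mu schP v); exists schP.
move=> x [Q ->].
have hP0 := util_ge0 schP v.
have hQ1 := util_le1 Q v.
case: (ltP (\sum_w Bw w * v w) 0) => h.
  have := util_neg Q v hv h; lra.
have := utilP_pos v h; lra.
Qed.

Lemma opt_ub v : has_ubound [set x : R | exists P : scheme R Om, x = sender_util R Om mu P v].
Proof. by exists 1 => x [Q ->]; exact: util_le1. Qed.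

Lemma opt_le1 v : opt_util R Om mu v <= 1.
Proof.
apply: ge_sup; first by exists (sender_util R Om mu schP v); exists schP.
by move=> x [Q ->]; exact: util_le1.
Qed.

Lemma util_le_opt Q v : sender_util R Om mu Q v <= opt_util R Om mu v.
Proof. by apply: (ub_le_sup (opt_ub v)); exists Q. Qed.

Lemma zero_mon : mon_md R k n (fun _ => 0).
Proof. by move=> j w1 w2 _ _. Qed.

Lemma regret_ub Q : has_ubound [set opt_util R Om mu v - sender_util R Om mu Q v | v in mon_md R k n].
Proof.
exists 1 => x [v _ <-].
have := opt_le1 v; have := util_ge0 Q v; lra.
Qed.

Lemma regret_ge0 Q : 0 <= regret_of R Om mu (mon_md R k n) Q.
Proof.
have h1 : opt_util R Om mu (fun _ => 0) - sender_util R Om mu Q (fun _ => 0)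
    <= regret_of R Om mu (mon_md R k n) Q.
  by apply: (ub_le_sup (regret_ub Q)); exists (fun _ => 0) => //; exact: zero_mon.
apply: le_trans h1; rewrite subr_ge0; exact: util_le_opt.
Qed.

Lemma regretP_le : regret_of R Om mu (mon_md R k n) schP <= 1 - ss.
Proof.
apply: ge_sup.
  by exists (opt_util R Om mu (fun _ => 0) - sender_util R Om mu schP (fun _ => 0));
     exists (fun _ => 0) => //; exact: zero_mon.
move=> x [v hv <-]; have := opt_bound v hv; lra.
Qed.

Lemma main_bound : Reg R Om mu (mon_md R k n) <= 1 - ss.
Proof.
apply: le_trans regretP_le; apply: ge_inf; last by exists schP.
by exists 0 => x [Q ->]; exact: regret_ge0.
Qed.
End Multi.

Theorem proposition3 (R : realType) (k : nat) (n : 'I_k -> nat)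
  (mus : forall j : 'I_k, 'I_(n j) -> R)
  (mus_pos : forall (j : 'I_k) (a : 'I_(n j)), 0 < mus j a)
  (mus_sum1 : forall j : 'I_k, \sum_(a : 'I_(n j)) mus j a = 1) :
  Reg R (state k n) (prod_prior R k n mus) (mon_md R k n) <= 1 - 2%:R ^- k.
Proof.
have := @main_bound R k n mus mus_pos mus_sum1.
by rewrite /ss exprVn.
Qed.
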